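(* Let $l\geq 2$ be an integer and set $Q(\lambda,R):=P_l(\lambda,R-\lambda)$. Then $Q$ is a polynomial that contains the monomials $\lambda^l$ and $R$ with non-zero coefficients and contains no monomials $\lambda^k$ with $k\neq l$.
   Context: For $l\in\mathbb N$ and $\mu\in\mathbb C$, $H_l$ is the tridiagonal $l\times l$ matrix with entries $H_{l;jj}=(1-j)(l-j+1)$, $H_{l;j,j+1}=\mu j$, $H_{l;j,j-1}=\mu(l-j+1)$, and $H_{l;ij}=0$ if $|i-j|\geq 2$; $\det(H_l+\lambda\,\mathrm{Id})$ is a polynomial of degree $l$ in $(\lambda,\mu^2)$, written $P_l(\lambda,\mu^2)$. Thus $Q(\lambda,R)$ is $\det(H_l+\lambda\,\mathrm{Id})$ after the substitution $\mu^2=R-\lambda$. *)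

(* Defs.v *)
From HB Require Import structures.
From mathcomp Require Import all_boot all_order all_algebra.
From mathcomp Require Import mpoly.
Set Implicit Arguments. Unset Strict Implicit. Unset Printing Implicit Defensive.
Import Order.TTheory GRing.Theory Num.Theory.
Local Open Scope ring_scope.

(* The tridiagonal l x l matrix H_l(mu), with 1-based index j = i+1 for the
   0-based ordinal i:
     H_{j,j}   = (1-j)(l-j+1)  = - i * (l - i)
     H_{j,j+1} = mu * j        = mu * (i+1)
     H_{j,j-1} = mu * (l-j+1)  = mu * (l - i)                               *)
Definition Hmat (T : comNzRingType) (l : nat) (mu : T) : 'M[T]_l :=
  \matrix_(i < l, j < l)
    if (j : nat) == i then - ((i : nat)%:R * (l - i)%:R)
    else if (j : nat) == i.+1 then mu * (i.+1)%:R
    else if (i : nat) == j.+1 then mu * (l - i)%:R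
    else 0.

(* Bivariate integer polynomials; variable 0 is lambda, variable 1 is the
   second variable (mu, mu^2 or R depending on context). *)
Notation bipoly := {mpoly int[2]}.

Definition lamX : bipoly := 'X_(@ord0 1).
Definition varY : bipoly := 'X_(@ord_max 1).

Definition detH (l : nat) : bipoly := \det (Hmat l varY + lamX%:M).

Definition is_P (l : nat) (P : bipoly) : Prop :=
  P \mPo [tuple lamX; varY ^+ 2] = detH l.

Definition Qof (P : bipoly) : bipoly := P \mPo [tuple lamX; varY - lamX].

Definition mono (a b : nat) : 'X_{1..2} :=
  (U_(@ord0 1) *+ a + U_(@ord_max 1) *+ b)%MM.

(* Main.v *)
Require Import Defs.
From HB Require Import structures.
From mathcomp Require Import all_boot all_order all_algebra.
From mathcomp Require Import mpoly.
From mathcomp Require Import ring zify.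
Import GRing.Theory Num.Theory.
Local Open Scope ring_scope.

Section Tri.
Variable T : comNzRingType.
Variable M : nat -> nat -> T.
Hypothesis lo : forall i j : nat, (j.+1 < i)%N -> M i j = 0.
Hypothesis up : forall i j : nat, (i.+1 < j)%N -> M i j = 0.

Definition Mk k : 'M[T]_k := \matrix_(i < k, j < k) M i j.

Lemma det_tri k : \det (Mk k.+2) =
  M k.+1 k.+1 * \det (Mk k.+1) - M k.+1 k * M k k.+1 * \det (Mk k).
Proof.
rewrite (expand_det_row _ ord_max) big_ord_recr /= big_ord_recr /=.
rewrite big1 ?add0r; last first.
  move=> j _; rewrite /Mk mxE lo ?mul0r //= ltnS.
  by apply: (leq_trans (ltn_ord j)).
rewrite /cofactor !mxE /=.
have -> : row' ord_max (col' ord_max (Mk k.+2)) = Mk k.+1.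
  by apply/matrixP => i j; rewrite !mxE !lift_max.
set B := row' _ _.
rewrite (expand_det_col _ ord_max) big_ord_recr /=.
rewrite big1 ?add0r; last first.
  move=> i _; rewrite /B !mxE /= /bump leqnn.
  have -> : (k < i)%N = false by rewrite ltnNge ltnW.
  by rewrite up ?mul0r //= add0n add1n ltnS.
rewrite /cofactor /B !mxE /= /bump /= leqnn ltnn /= add0n add1n.
have -> : row' ord_max (col' ord_max (row' ord_max (col' (widen_ord (leqnSn k.+1) ord_max) (Mk k.+2)))) = Mk k.
  apply/matrixP => -[i hi] [j hj]; rewrite !mxE /= /bump /=.
  have -> : (k <= i)%N = false by apply/negbTE; rewrite -ltnNge.
  rewrite add0n.
  have -> : (k < i)%N = false by apply/negbTE; rewrite -leqNgt ltnW.
  have -> : (k <= j)%N = false by apply/negbTE; rewrite -ltnNge.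
  rewrite /= !add0n.
  have -> : (k <= j)%N = false by apply/negbTE; rewrite -ltnNge.
  by [].
have s1 : (-1)^+(k.+1+k) = -1 :> T by rewrite -signr_odd addSn addnn /= odd_double.
have s2 : (-1)^+(k+k) = 1 :> T by rewrite -signr_odd addnn odd_double.
have s3 : (-1)^+(k.+1+k.+1) = 1 :> T by rewrite -signr_odd addnn odd_double.
rewrite s1 s2 s3.
ring.
Qed.
End Tri.

Definition t2 : 2.-tuple bipoly := [tuple lamX; varY ^+ 2].
Definition t3 : 2.-tuple bipoly := [tuple lamX; varY - lamX].

Lemma mnm2P (m m' : 'X_{1..2}) :
  m ord0 = m' ord0 -> m ord_max = m' ord_max -> m = m'.
Proof.
move=> h0 h1; apply/mnmP => -[[|[|i]] hi] //.
- by rewrite (_ : Ordinal hi = ord0) //; apply/val_inj.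
- by rewrite (_ : Ordinal hi = ord_max) //; apply/val_inj.
Qed.

Lemma mono0 a b : mono a b ord0 = a.
Proof. by rewrite /mono mnmDE !mulmnE !mnm1E /=; lia. Qed.
Lemma mono1 a b : mono a b ord_max = b.
Proof. by rewrite /mono mnmDE !mulmnE !mnm1E /=; lia. Qed.

Lemma monoE (m : 'X_{1..2}) : m = mono (m ord0) (m ord_max).
Proof. by apply: mnm2P; rewrite ?mono0 ?mono1. Qed.

Lemma Xmono a b : 'X_[mono a b] = lamX ^+ a * varY ^+ b :> bipoly.
Proof. by rewrite /mono mpolyXD -!mpolyXn. Qed.

Lemma comp_t2_X (m : 'X_{1..2}) :
  'X_[m] \mPo t2 = 'X_[mono (m ord0) (2 * m ord_max)].
Proof.
rewrite comp_mpolyX Xmono big_ord_recr /= big_ord1 -exprM mulnC.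
by rewrite (_ : widen_ord _ _ = ord0); last exact: val_inj.
Qed.

Lemma coef_t2 (p : bipoly) (m' : 'X_{1..2}) :
  (p \mPo t2)@_(mono (m' ord0) (2 * m' ord_max)) = p@_m'.
Proof.
rewrite comp_mpolyEX raddf_sum /=.
have -> : p@_m' = (\sum_(m <- msupp p) p@_m *: 'X_[m])@_m' by rewrite -mpolyE.
rewrite raddf_sum /=.
apply: eq_bigr => m _; rewrite !mcoeffZ comp_t2_X !mcoeffX.
suff -> : (mono (m ord0) (2 * m ord_max) == mono (m' ord0) (2 * m' ord_max)) = (m == m') by [].
case: (eqVneq m m') => [->|ne]; first by rewrite eqxx.
apply/negbTE/eqP => h; move/eqP: ne; apply.
have h0 := congr1 (fun x : 'X_{1..2} => x ord0) h.
have h1 := congr1 (fun x : 'X_{1..2} => x ord_max) h.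
rewrite /= !mono0 !mono1 in h0 h1.
apply: mnm2P => //; apply/eqP; by rewrite -(@eqn_pmul2l 2) // h1.
Qed.

Lemma comp_t2_inj (p q : bipoly) : p \mPo t2 = q \mPo t2 -> p = q.
Proof.
move=> h; apply/mpolyP => m; by rewrite -[p@_m]coef_t2 -[q@_m]coef_t2 h.
Qed.

Definition cn (l i : nat) : nat := (i * (l - i))%N.

Definition Mf (l : nat) (i j : nat) : bipoly :=
  (if j == i then - (i%:R * (l - i)%:R)
   else if j == i.+1 then varY * (i.+1)%:R
   else if i == j.+1 then varY * (l - i)%:R
   else 0) + lamX *+ (i == j).

Lemma Mf_lo l i j : (j.+1 < i)%N -> Mf l i j = 0.
Proof.
move=> h; rewrite /Mf.
have -> : (j == i) = false by apply/negbTE/eqP; lia.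
have -> : (j == i.+1) = false by apply/negbTE/eqP; lia.
have -> : (i == j.+1) = false by apply/negbTE/eqP; lia.
have -> : (i == j) = false by apply/negbTE/eqP; lia.
by rewrite addr0.
Qed.

Lemma Mf_up l i j : (i.+1 < j)%N -> Mf l i j = 0.
Proof.
move=> h; rewrite /Mf.
have -> : (j == i) = false by apply/negbTE/eqP; lia.
have -> : (j == i.+1) = false by apply/negbTE/eqP; lia.
have -> : (i == j.+1) = false by apply/negbTE/eqP; lia.
have -> : (i == j) = false by apply/negbTE/eqP; lia.
by rewrite addr0.
Qed.

Lemma detH_Mk l : detH l = \det (@Mk _ (Mf l) l).
Proof. by rewrite /detH; congr (\det _); apply/matrixP => i j; rewrite !mxE. Qed.

Fixpoint Pp (l k : nat) : bipoly * bipoly :=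
  match k with
  | 0 => (1, lamX)
  | k'.+1 => let (a, b) := Pp l k' in
             (b, (lamX - (cn l k'.+1)%:R) * b - varY * (cn l k'.+1)%:R * a)
  end.

Lemma comp_lam (t : 2.-tuple bipoly) : lamX \mPo t = t`_0.
Proof. by rewrite /lamX comp_mpolyXU. Qed.
Lemma comp_Y (t : 2.-tuple bipoly) : varY \mPo t = t`_1.
Proof. by rewrite /varY comp_mpolyXU. Qed.

Lemma Pp_spec l k : (Pp l k).1 \mPo t2 = \det (@Mk _ (Mf l) k) /\
                    (Pp l k).2 \mPo t2 = \det (@Mk _ (Mf l) k.+1).
Proof.
elim: k => [|k IH].
  split; first by rewrite /= rmorph1 det_mx00.
  rewrite /= comp_lam det_mx11 /Mk mxE /Mf /=.
  by rewrite mul0r oppr0 add0r.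
move: IH; rewrite /=; case: (Pp l k) => a b /= [IHa IHb]; split => //.
rewrite det_tri; [|exact: Mf_lo|exact: Mf_up].
rewrite rmorphB !rmorphM rmorphB /= comp_lam comp_Y !rmorph_nat IHa IHb /=.
rewrite /Mf /cn eqxx.
have -> : (k == k.+1) = false by apply/negbTE/eqP; lia.
have -> : (k.+1 == k) = false by apply/negbTE/eqP; lia.
have -> : (k == k.+2) = false by apply/negbTE/eqP; lia.
rewrite /= natrM.
ring.
Qed.

Lemma mono_eq a b c d : (mono a b == mono c d) = (a == c) && (b == d).
Proof.
apply/idP/idP.
  move/eqP => h; have := congr1 (fun x : 'X_{1..2} => x ord0) h.
  have := congr1 (fun x : 'X_{1..2} => x ord_max) h.
  by rewrite /= !mono0 !mono1 => -> ->; rewrite !eqxx.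
by case/andP => /eqP-> /eqP->.
Qed.

Definition ev (h : 'I_2 -> {poly int}) (p : bipoly) : {poly int} :=
  mmap (@polyC int) h p.

Lemma mmap1_2 (h : 'I_2 -> {poly int}) (m : 'X_{1..2}) :
  mmap1 h m = h ord0 ^+ m ord0 * h ord_max ^+ m ord_max.
Proof.
rewrite /mmap1 big_ord_recr /= big_ord1.
by rewrite (_ : widen_ord _ _ = ord0); last exact: val_inj.
Qed.

Lemma bridge (h : 'I_2 -> {poly int}) (p : bipoly) (m0 : 'X_{1..2}) j :
  (forall m, (mmap1 h m)`_j = (m == m0)%:R) -> (ev h p)`_j = p@_m0.
Proof.
move=> H; rewrite /ev /mmap coef_sum.
have -> : p@_m0 = (\sum_(m <- msupp p) p@_m *: 'X_[m])@_m0 by rewrite -mpolyE.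
rewrite raddf_sum /=; apply: eq_bigr => m _.
by rewrite coefCM H mcoeffZ mcoeffX.
Qed.

Lemma ev_X h i : ev h ('X_i) = h i.
Proof. by rewrite /ev mmapX mmap1U. Qed.

Definition h0 (i : 'I_2) : {poly int} := if i == ord0 then 'X else 0.
Definition h1 (i : 'I_2) : {poly int} := if i == ord0 then 0 else 'X.

Lemma bridge0 p k : (ev h0 p)`_k = p@_(mono k 0).
Proof.
apply: bridge => m; rewrite mmap1_2 [X in (X == _)](monoE m) mono_eq /h0 /=.
case: (m ord_max) => [|b]; first by rewrite expr0 mulr1 coefXn andbT eq_sym.
by rewrite expr0n /= mulr0 coef0 andbF.
Qed.

Lemma bridge1 p : (ev h1 p)`_1 = p@_(mono 0 1).
Proof.
apply: bridge => m; rewrite mmap1_2 [X in (X == _)](monoE m) mono_eq /h1 /=.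
case: (m ord0) => [|a]; last by rewrite expr0n /= mul0r coef0.
by rewrite expr0 mul1r coefXn eq_sym.
Qed.

Lemma Pp_rec l k : (Pp l k.+2).1 =
  (lamX - (cn l k.+1)%:R) * (Pp l k.+1).1 - varY * (cn l k.+1)%:R * (Pp l k).1.
Proof. by rewrite /=; case: (Pp l k). Qed.

Lemma evQ_rec h l k : ev h ((Pp l k.+2).1 \mPo t3) =
  (h ord0 - (cn l k.+1)%:R) * ev h ((Pp l k.+1).1 \mPo t3)
  - (h ord_max - h ord0) * (cn l k.+1)%:R * ev h ((Pp l k).1 \mPo t3).
Proof.
rewrite Pp_rec rmorphB !rmorphM rmorphB /= comp_lam comp_Y !rmorph_nat /=.
rewrite /ev !rmorphB !rmorphM !rmorphB !rmorph_nat /= -!/(ev h _).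
by rewrite /lamX /varY !ev_X.
Qed.



Lemma Pp0 l : (Pp l 0).1 = 1. Proof. by []. Qed.
Lemma Pp1 l : (Pp l 1).1 = lamX. Proof. by []. Qed.

Lemma ev0Q l k : ev h0 ((Pp l k).1 \mPo t3) = 'X ^+ k.
Proof.
suff : ev h0 ((Pp l k).1 \mPo t3) = 'X ^+ k /\
       ev h0 ((Pp l k.+1).1 \mPo t3) = 'X ^+ k.+1 by case.
elim: k => [|k [IH1 IH2]].
  rewrite Pp0 Pp1 comp_mpoly1 comp_lam /=.
  by rewrite {1}/ev rmorph1 /lamX ev_X /h0 /= expr1.
split => //; rewrite evQ_rec IH1 IH2 /h0 /=.
move: (cn l k.+1)%:R => c; rewrite !exprS; ring.
Qed.

Lemma h1_0 : h1 ord0 = 0. Proof. by []. Qed.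
Lemma h1_1 : h1 ord_max = 'X. Proof. by []. Qed.

Lemma ev1Q_0 l k : (ev h1 ((Pp l k).1 \mPo t3))`_0 = (k == 0)%:R.
Proof.
suff : (ev h1 ((Pp l k).1 \mPo t3))`_0 = (k == 0)%:R /\
       (ev h1 ((Pp l k.+1).1 \mPo t3))`_0 = 0 by case.
elim: k => [|k [IH1 IH2]].
  rewrite Pp0 Pp1 comp_mpoly1 comp_lam /=.
  rewrite {1}/ev rmorph1 /lamX ev_X /h1 /=.
  by rewrite coefC coef0.
split => //; rewrite evQ_rec h1_0 h1_1.
rewrite sub0r subr0 coefB mulNr coefN -mulrA coefXM /= mulr_natl coefMn IH2.
by rewrite mul0rn oppr0 subr0.
Qed.

Lemma ev1Q_rec1 l k : (ev h1 ((Pp l k.+2).1 \mPo t3))`_1 =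
  - ((ev h1 ((Pp l k.+1).1 \mPo t3))`_1 *+ cn l k.+1)
  - (ev h1 ((Pp l k).1 \mPo t3))`_0 *+ cn l k.+1.
Proof.
rewrite evQ_rec h1_0 h1_1.
by rewrite sub0r subr0 coefB mulNr coefN -mulrA coefXM /= !mulr_natl coefMn coefMn.
Qed.

Lemma cn_neq0 l k : (k.+2 <= l)%N -> cn l k.+1 != 0%N.
Proof. rewrite /cn => h; rewrite muln_eq0 negb_or /=; apply/eqP; lia. Qed.

Lemma ev1Q_1 l k : (k.+2 <= l)%N -> (ev h1 ((Pp l k.+2).1 \mPo t3))`_1 != 0.
Proof.
elim: k => [|k IH] h.
  rewrite ev1Q_rec1 ev1Q_0 Pp1 comp_lam /= /lamX ev_X h1_0 coef0 mul0rn oppr0 sub0r.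
  by rewrite oppr_eq0 mulrn_eq0 negb_or cn_neq0.
rewrite ev1Q_rec1 (ev1Q_0 l k.+1) /= mul0rn subr0 oppr_eq0 mulrn_eq0 negb_or.
rewrite cn_neq0 // IH //; lia.
Qed.

Theorem proposition2p1 (l : nat) (hl : (2 <= l)%N) :
  (exists P : bipoly, is_P l P) /\
  (forall P : bipoly, is_P l P ->
     let Q := Qof P in
     Q@_(mono l 0) != 0 /\
     Q@_(mono 0 1) != 0 /\
     (forall k : nat, k <> l -> Q@_(mono k 0) = 0)).
Proof.
have HP : is_P l (Pp l l).1.
  by rewrite /is_P detH_Mk; exact: (proj1 (Pp_spec l l)).
split; first by exists (Pp l l).1.
move=> P hP /=.
have -> : P = (Pp l l).1 by apply: comp_t2_inj; exact: (etrans hP (esym HP)).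
rewrite /Qof -/t3 -!bridge0 -bridge1 !ev0Q.
split; first by rewrite coefXn eqxx oner_eq0.
split.
  clear HP hP; case: l hl => [|[|l']] // hl.
  exact: ev1Q_1.
by move=> k hk; rewrite -bridge0 ev0Q coefXn; move/eqP/negbTE: hk => ->.
Qed.
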